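(* Let $f_1,\dots,f_n$ satisfy Assumptions A1 and A2. Then for all $\beta,\beta'\in\Delta^{n-1}$, \[\|\nabla x^*(\beta)-\nabla x^*(\beta')\|_{1,2}\le\frac{2L^2R}{\mu^2}\left(1+\frac{L_HR}{\mu}\right)\|\beta-\beta'\|_1.\]
   Context: Assumption A1: each $f_i:\mathbb{R}^d\to\mathbb{R}$ is twice differentiable with $\mu\mathbf{I}\preceq\nabla^2 f_i\preceq L\mathbf{I}$, $0<\mu\le L$. Assumption A2: $\|\nabla^2 f_i(x)-\nabla^2 f_i(y)\|_2\le L_H\|x-y\|_2$ for all $x,y,i$. $F=(f_1,\dots,f_n)$, $\nabla F(x)\in\mathbb{R}^{n\times d}$ its Jacobian, $\Delta^{n-1}$ the simplex, $f_\beta=\sum_i\beta_if_i$, $x^*(\beta)=x_\beta=\operatorname{argmin}_xf_\beta(x)$, with $\nabla x^*(\beta)=-\nabla^2f_\beta(x_\beta)^{-1}\nabla F(x_\beta)^\top$. $R$ is the $\ell_2$-diameter of the Pareto set of $F$ (points $x$ with $\nabla f_\beta(x)=0$ for some $\beta$). $\|A\|_{1,2}:=\sup_{\|z\|_1=1}\|Az\|_2$. *)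

(* Defs.v *)
From mathcomp Require Import all_boot all_order all_algebra.
From mathcomp Require Import all_classical all_reals all_analysis.
Set Implicit Arguments. Unset Strict Implicit. Unset Printing Implicit Defensive.
Import Order.TTheory GRing.Theory Num.Theory.
Import numFieldNormedType.Exports.
Local Open Scope classical_set_scope.
Local Open Scope ring_scope.

Section Defs.
Variable R : realType.

Definition vnorm2 {m k : nat} (v : 'M[R]_(m, k)) : R :=
  Num.sqrt (\sum_i \sum_j (v i j) ^+ 2).

Definition vnorm1 {k : nat} (z : 'cV[R]_k) : R := \sum_i `|z i 0|.

Definition spec_norm {d : nat} (M : 'M[R]_d) : R :=
  sup [set vnorm2 (M *m v) | v in [set v : 'cV[R]_d | vnorm2 v = 1]].

Definition norm12 {m k : nat} (A : 'M[R]_(m, k)) : R :=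
  sup [set vnorm2 (A *m z) | z in [set z : 'cV[R]_k | vnorm1 z = 1]].

Definition ebasis {d : nat} (j : 'I_d) : 'rV[R]_d := delta_mx 0 j.

Definition partial {d : nat} (f : 'rV[R]_d -> R) (j : 'I_d) (x : 'rV[R]_d) : R :=
  'D_(ebasis j) f x.
Definition grad {d : nat} (f : 'rV[R]_d -> R) (x : 'rV[R]_d) : 'rV[R]_d :=
  \row_j partial f j x.
Definition hess {d : nat} (f : 'rV[R]_d -> R) (x : 'rV[R]_d) : 'M[R]_d :=
  \matrix_(i, j) 'D_(ebasis j) (fun y => partial f i y) x.

Definition twice_diff {d : nat} (f : 'rV[R]_d -> R) : Prop :=
  forall x, differentiable f x /\ differentiable (grad f) x.

Definition in_simplex {n : nat} (b : 'I_n -> R) : Prop :=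
  (forall i, 0 <= b i) /\ \sum_i b i = 1.

Definition l1dist {n : nat} (b b' : 'I_n -> R) : R := \sum_i `|b i - b' i|.

Definition fbeta {n d : nat} (F : 'I_n -> 'rV[R]_d -> R) (b : 'I_n -> R)
  (x : 'rV[R]_d) : R := \sum_i b i * F i x.

Definition xstar {n d : nat} (F : 'I_n -> 'rV[R]_d -> R) (b : 'I_n -> R) : 'rV[R]_d :=
  xget 0 [set x | forall y, fbeta F b x <= fbeta F b y].

Definition jacF {n d : nat} (F : 'I_n -> 'rV[R]_d -> R) (x : 'rV[R]_d) : 'M[R]_(n, d) :=
  \matrix_(i, j) partial (F i) j x.

Definition dxstar {n d : nat} (F : 'I_n -> 'rV[R]_d -> R) (b : 'I_n -> R) : 'M[R]_(d, n) :=
  - (invmx (hess (fbeta F b) (xstar F b)) *m (jacF F (xstar F b))^T).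

Definition pareto_set {n d : nat} (F : 'I_n -> 'rV[R]_d -> R) : set 'rV[R]_d :=
  [set x | exists b, in_simplex b /\ grad (fbeta F b) x = 0].

Definition pareto_diam {n d : nat} (F : 'I_n -> 'rV[R]_d -> R) : R :=
  sup [set r : R | exists x y : 'rV[R]_d,
    pareto_set F x /\ pareto_set F y /\ r = vnorm2 (x - y)].

End Defs.

(* Main.v *)
Require Import Defs.
From mathcomp Require Import all_boot all_order all_algebra.
From mathcomp Require Import all_classical all_reals all_analysis.
From mathcomp Require Import ring lra.
Set Implicit Arguments. Unset Strict Implicit. Unset Printing Implicit Defensive.
Import Order.TTheory GRing.Theory Num.Theory.
Import numFieldNormedType.Exports.
Local Open Scope classical_set_scope.
Local Open Scope ring_scope.
Section LinAlg.
Variable R : realType.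

Definition dotM {m k : nat} (A B : 'M[R]_(m, k)) : R :=
  \sum_i \sum_j A i j * B i j.

Lemma vnorm2E m k (A : 'M[R]_(m,k)) : vnorm2 A = Num.sqrt (dotM A A).
Proof. by rewrite /vnorm2 /dotM; apply: congr1; apply: eq_bigr => i _; apply: eq_bigr => j _; rewrite expr2. Qed.

Lemma dotC m k (A B : 'M[R]_(m,k)) : dotM A B = dotM B A.
Proof. by apply: eq_bigr => i _; apply: eq_bigr => j _; rewrite mulrC. Qed.

Lemma dotDl m k (A B C : 'M[R]_(m,k)) : dotM (A + B) C = dotM A C + dotM B C.
Proof. rewrite /dotM -big_split; apply: eq_bigr => i _; rewrite -big_split; apply: eq_bigr => j _; by rewrite mxE mulrDl. Qed.

Lemma dotZl m k a (A C : 'M[R]_(m,k)) : dotM (a *: A) C = a * dotM A C.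
Proof. rewrite /dotM mulr_sumr; apply: eq_bigr => i _; rewrite mulr_sumr; apply: eq_bigr => j _; by rewrite mxE mulrA. Qed.

Lemma dotNl m k (A C : 'M[R]_(m,k)) : dotM (- A) C = - dotM A C.
Proof. by rewrite -scaleN1r dotZl mulN1r. Qed.

Lemma dotBl m k (A B C : 'M[R]_(m,k)) : dotM (A - B) C = dotM A C - dotM B C.
Proof. by rewrite dotDl dotNl. Qed.

Lemma dotDr m k (A B C : 'M[R]_(m,k)) : dotM C (A + B) = dotM C A + dotM C B.
Proof. by rewrite dotC dotDl !(dotC C). Qed.
Lemma dotZr m k a (A C : 'M[R]_(m,k)) : dotM C (a *: A) = a * dotM C A.
Proof. by rewrite dotC dotZl dotC. Qed.
Lemma dotNr m k (A C : 'M[R]_(m,k)) : dotM C (- A) = - dotM C A.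
Proof. by rewrite dotC dotNl dotC. Qed.
Lemma dotBr m k (A B C : 'M[R]_(m,k)) : dotM C (A - B) = dotM C A - dotM C B.
Proof. by rewrite dotDr dotNr. Qed.
Lemma dot0l m k (C : 'M[R]_(m,k)) : dotM 0 C = 0.
Proof. by rewrite -(scale0r 0) dotZl mul0r. Qed.
Lemma dot0r m k (C : 'M[R]_(m,k)) : dotM C 0 = 0.
Proof. by rewrite dotC dot0l. Qed.

Lemma dotxx_ge0 m k (A : 'M[R]_(m,k)) : 0 <= dotM A A.
Proof. by apply: sumr_ge0 => i _; apply: sumr_ge0 => j _; rewrite -expr2 sqr_ge0. Qed.

Lemma dotxx_eq0 m k (A : 'M[R]_(m,k)) : dotM A A = 0 -> A = 0.
Proof.
move=> /eqP; rewrite psumr_eq0 => [/allP H|i _]; last first.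
  by apply: sumr_ge0 => j _; rewrite -expr2 sqr_ge0.
apply/matrixP => i j; rewrite mxE.
have := H i (mem_index_enum _); rewrite /= => /eqP/eqP.
rewrite psumr_eq0 => [/allP H2|j' _]; last by rewrite -expr2 sqr_ge0.
have := H2 j (mem_index_enum _); rewrite /= -expr2 sqrf_eq0.
by move/eqP.
Qed.

Definition nrm {m k : nat} (A : 'M[R]_(m, k)) := vnorm2 A.

Lemma nrm_ge0 m k (A : 'M[R]_(m,k)) : 0 <= nrm A.
Proof. by rewrite /nrm vnorm2E sqrtr_ge0. Qed.

Lemma nrm_sq m k (A : 'M[R]_(m,k)) : nrm A ^+ 2 = dotM A A.
Proof. by rewrite /nrm vnorm2E sqr_sqrtr // dotxx_ge0. Qed.

Lemma nrm_eq0 m k (A : 'M[R]_(m,k)) : nrm A = 0 -> A = 0.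
Proof. by move=> h; apply: dotxx_eq0; rewrite -nrm_sq h expr0n. Qed.

Lemma nrm0 m k : nrm (0 : 'M[R]_(m,k)) = 0.
Proof. by rewrite /nrm vnorm2E dot0l sqrtr0. Qed.

Lemma CS m k (A B : 'M[R]_(m,k)) : dotM A B <= nrm A * nrm B.
Proof.
have [a0|an0] := eqVneq (nrm A) 0.
  by rewrite (nrm_eq0 a0) dot0l nrm0 mul0r.
have [b0|bn0] := eqVneq (nrm B) 0.
  by rewrite (nrm_eq0 b0) dot0r nrm0 mulr0.
have ha : 0 < nrm A by rewrite lt_def an0 nrm_ge0.
have hb : 0 < nrm B by rewrite lt_def bn0 nrm_ge0.
have := dotxx_ge0 (nrm B *: A - nrm A *: B).
rewrite !(dotBl, dotBr, dotZl, dotZr) -!nrm_sq (dotC B A).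
move: (dotM A B) (nrm A) (nrm B) ha hb => x a b ha hb h.
have hab : 0 < a * b by rewrite mulr_gt0.
nra.
Qed.

Lemma CSabs m k (A B : 'M[R]_(m,k)) : `|dotM A B| <= nrm A * nrm B.
Proof.
rewrite ler_norml CS andbT lerNl -dotNl.
apply: le_trans (CS _ _) _.
by rewrite /nrm !vnorm2E dotNl dotNr opprK.
Qed.

Lemma nrmD m k (A B : 'M[R]_(m,k)) : nrm (A + B) <= nrm A + nrm B.
Proof.
rewrite -(ler_pXn2r (n:=2)) ?nrm_ge0 ?addr_ge0 ?nrm_ge0 // ?nnegrE ?nrm_ge0 ?addr_ge0 ?nrm_ge0 //.
rewrite nrm_sq !(dotDl, dotDr) sqrrD -!nrm_sq (dotC B A).
have := CS A B; lra.
Qed.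

Lemma nrmZ m k a (A : 'M[R]_(m,k)) : nrm (a *: A) = `|a| * nrm A.
Proof.
rewrite /nrm !vnorm2E dotZl dotZr mulrA -expr2 sqrtrM ?sqr_ge0 //.
by rewrite sqrtr_sqr.
Qed.

Lemma nrmN m k (A : 'M[R]_(m,k)) : nrm (- A) = nrm A.
Proof. by rewrite -scaleN1r nrmZ normrN normr1 mul1r. Qed.

Lemma nrmB m k (A B : 'M[R]_(m,k)) : nrm (A - B) <= nrm A + nrm B.
Proof. by rewrite -(nrmN B) nrmD. Qed.

Lemma nrm_sum m k n (F : 'I_n -> 'M[R]_(m,k)) : nrm (\sum_i F i) <= \sum_i nrm (F i).
Proof.
elim/big_ind2: _ => //; first by rewrite nrm0.
by move=> x1 x2 y1 y2 h1 h2; apply: le_trans (nrmD _ _) _; apply: lerD.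
Qed.

Lemma nrm_tr m k (A : 'M[R]_(m,k)) : nrm A^T = nrm A.
Proof.
rewrite /nrm !vnorm2E /dotM exchange_big; congr Num.sqrt.
by apply: eq_bigr => i _; apply: eq_bigr => j _; rewrite !mxE.
Qed.

Lemma dot_tr m k (A B : 'M[R]_(m,k)) : dotM A^T B^T = dotM A B.
Proof.
rewrite /dotM exchange_big.
by apply: eq_bigr => i _; apply: eq_bigr => j _; rewrite !mxE.
Qed.

End LinAlg.
Section LinAlg2.
Variable R : realType.

Lemma mulmx_col_entry m k (M : 'M[R]_(m,k)) (c : 'cV[R]_k) i :
  (M *m c) i 0 = dotM (row i M) c^T.
Proof.
rewrite mxE /dotM big_ord1; apply: eq_bigr => l _; by rewrite !mxE.
Qed.

Lemma nrm_row_sq m k (M : 'M[R]_(m,k)) i : nrm (row i M) ^+ 2 = \sum_l M i l * M i l.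
Proof. by rewrite nrm_sq /dotM big_ord1; apply: eq_bigr => l _; rewrite !mxE. Qed.

Lemma nrm_mulmx m k (M : 'M[R]_(m,k)) (c : 'cV[R]_k) : nrm (M *m c) <= nrm M * nrm c.
Proof.
rewrite -(ler_pXn2r (n:=2)) ?nnegrE ?nrm_ge0 ?mulr_ge0 ?nrm_ge0 //.
rewrite exprMn !nrm_sq.
rewrite {1}/dotM.
have -> : \sum_i \sum_j (M *m c) i j * (M *m c) i j = \sum_i (dotM (row i M) c^T) ^+ 2.
  by apply: eq_bigr => i _; rewrite big_ord1 -mulmx_col_entry expr2.
rewrite {2}/dotM mulr_suml; apply: ler_sum => i _.
have h := CSabs (row i M) c^T.
have h2 : dotM (row i M) c^T ^+ 2 <= (nrm (row i M) * nrm c^T) ^+ 2.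
  move: h; rewrite ler_norml; move: (dotM _ _) (nrm (row i M) * nrm c^T) => x y /andP[h1 h2]; nra.
by move: h2; rewrite exprMn nrm_row_sq nrm_tr nrm_sq.
Qed.

Lemma spec_norm_ub d (M : 'M[R]_d) : has_ubound [set vnorm2 (M *m v) | v in [set v : 'cV[R]_d | vnorm2 v = 1]].
Proof.
exists (nrm M) => _ [v /= hv <-].
by have := nrm_mulmx M v; rewrite /nrm hv mulr1.
Qed.

Lemma spec_norm_bound d (M : 'M[R]_d) (v : 'cV[R]_d) : nrm (M *m v) <= spec_norm M * nrm v.
Proof.
have [v0|vn0] := eqVneq (nrm v) 0.
  by rewrite v0 mulr0 (nrm_eq0 v0) mulmx0 nrm0.
have hv : 0 < nrm v by rewrite lt_def vn0 nrm_ge0.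
pose v' := (nrm v)^-1 *: v.
have hv' : vnorm2 v' = 1.
  by rewrite -/(nrm v') nrmZ ger0_norm ?invr_ge0 ?nrm_ge0 // mulVf.
have := ub_le_sup (spec_norm_ub M) (ex_intro2 _ _ v' hv' erefl).
rewrite -/(spec_norm M) -/(nrm _) /v' -scalemxAr nrmZ ger0_norm ?invr_ge0 ?nrm_ge0 //.
by rewrite -ler_pdivrMr // mulrC.
Qed.

Lemma spec_norm_ge0 d (M : 'M[R]_d) (v : 'cV[R]_d) : vnorm2 v = 1 -> 0 <= spec_norm M.
Proof.
move=> hv; apply: le_trans (ub_le_sup (spec_norm_ub M) (ex_intro2 _ _ v hv erefl)).
exact: nrm_ge0.
Qed.

Lemma qf_dot d (A : 'M[R]_d) (c : 'cV[R]_d) : (c^T *m A *m c) 0 0 = dotM c (A *m c).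
Proof.
rewrite -mulmxA mxE /dotM; apply: eq_bigr => l _; by rewrite big_ord1 !mxE.
Qed.

Section Coercive.
Variables (d : nat) (A : 'M[R]_d) (mu : R).
Hypothesis hmu : 0 < mu.
Hypothesis hA : forall c : 'cV[R]_d, mu * nrm c ^+ 2 <= dotM c (A *m c).

Lemma coer_bound (c : 'cV[R]_d) : mu * nrm c <= nrm (A *m c).
Proof.
have [c0|cn0] := eqVneq (nrm c) 0.
  by rewrite c0 mulr0 nrm_ge0.
have hc : 0 < nrm c by rewrite lt_def cn0 nrm_ge0.
have := le_trans (hA c) (CS c (A *m c)).
by rewrite expr2 mulrA mulrC ler_pM2l.
Qed.

Lemma coer_unit : A \in unitmx.
Proof.
rewrite -unitmx_tr -row_free_unit; apply: inj_row_free => v hv.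
have : (v *m A^T)^T = A *m v^T by rewrite trmx_mul trmxK.
rewrite hv trmx0 => h.
have := coer_bound v^T; rewrite -h nrm0 => h2.
have : nrm v^T = 0.
  apply/eqP; rewrite eq_le nrm_ge0 andbT.
  by rewrite -(pmulr_rle0 _ hmu).
by rewrite nrm_tr => /nrm_eq0.
Qed.

Lemma inv_bound (y : 'cV[R]_d) : nrm (invmx A *m y) <= nrm y / mu.
Proof.
rewrite ler_pdivlMr // mulrC.
have := coer_bound (invmx A *m y).
by rewrite mulmxA mulmxV ?coer_unit // mul1mx.
Qed.
End Coercive.

Lemma norm12_le m n (M : 'M[R]_(m, n)) (C : R) (j0 : 'I_n) :
  (forall j, nrm (col j M) <= C) -> norm12 M <= C.
Proof.
move=> hc; apply: ge_sup.
  exists (nrm (M *m (delta_mx j0 0 : 'cV[R]_n))); exists (delta_mx j0 0 : 'cV[R]_n) => //=.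
  rewrite /vnorm1 (bigD1 j0) //= big1 => [|i hi]; first by rewrite !mxE !eqxx normr1 addr0.
  by rewrite mxE (negbTE hi) normr0.
move=> _ [z /= hz <-].
have -> : M *m z = \sum_j z j 0 *: col j M.
  apply/matrixP => i k; rewrite mxE summxE; apply: eq_bigr => j _.
  by rewrite !mxE (ord1 k) mulrC.
apply: le_trans (nrm_sum _) _.
have -> : C = \sum_j `|z j 0| * C by rewrite -mulr_suml -/(vnorm1 z) hz mul1r.
by apply: ler_sum => j _; rewrite nrmZ ler_wpM2l.
Qed.

End LinAlg2.
Section Calc.
Variables (R : realType) (d : nat).
Implicit Types (x v z : 'rV[R]_d).

Lemma D_decomp (W : normedModType R) (g : 'rV[R]_d -> W) x v :
  differentiable g x -> 'D_v g x = \sum_k v 0 k *: 'D_(ebasis R k) g x.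
Proof.
move=> dg; rewrite deriveE // {1}(row_sum_delta v) linear_sum.
by apply: eq_bigr => k _; rewrite linearZ deriveE.
Qed.

Lemma partial_grad (f : 'rV[R]_d -> R) j : partial f j = fun y => grad f y 0 j.
Proof. by apply: funext => y; rewrite mxE. Qed.

Lemma Dpartial (f : 'rV[R]_d -> R) z v j : differentiable (grad f) z ->
  derivable (partial f j) z v /\ 'D_v (partial f j) z = \sum_k v 0 k * hess f z j k.
Proof.
move=> dg; rewrite partial_grad; split.
  by move: (@diff_derivable _ _ _ _ _ v dg) => /derivable_mxP; apply.
have E := derive_mx (@diff_derivable _ _ _ _ _ v dg).
have -> : 'D_v (fun y => grad f y 0 j) z = ('D_v (grad f) z) 0 j by rewrite E mxE.
rewrite D_decomp // summxE; apply: eq_bigr => k _.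
rewrite mxE derive_mx ?mxE //; last exact: diff_derivable.
by rewrite partial_grad.
Qed.

Lemma Dfun (f : 'rV[R]_d -> R) x v : differentiable f x -> 'D_v f x = dotM (grad f x) v.
Proof.
move=> df; rewrite D_decomp // /dotM big_ord1; apply: eq_bigr => k _.
by rewrite mxE mulrC.
Qed.

Lemma line_derive (W : normedModType R) (g : 'rV[R]_d -> W) x v t :
  derivable g (x + t *: v) v ->
  is_derive t 1 (fun s => g (x + s *: v)) ('D_v g (x + t *: v)).
Proof.
move=> dg.
have E : (fun h : R => h^-1 *: (((fun s => g (x + s *: v)) \o shift t) (h *: 1) - g (x + t *: v)))
   = (fun h => h^-1 *: ((g \o shift (x + t *: v)) (h *: v) - g (x + t *: v))).
  apply: funext => h /=; congr (_ *: (g _ - _)).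
  by rewrite /shift /= -[h *: 1]/(h * 1) mulr1 scalerDl addrCA addrA.
apply: DeriveDef; first by rewrite /derivable E.
by rewrite /derive E.
Qed.

End Calc.
Section OneD.
Variable R : realType.

Lemma is_derive_sumf n (h : 'I_n -> R -> R) (t : R) (dh : 'I_n -> R) :
  (forall i, is_derive t 1 (h i) (dh i)) ->
  is_derive t 1 (fun s => \sum_i h i s) (\sum_i dh i).
Proof. by move=> H; rewrite -fct_sumE; apply: is_derive_sum. Qed.

Lemma is_derive_scal (h : R -> R) (t k dh : R) :
  is_derive t 1 h dh -> is_derive t 1 (fun s => k * h s) (k * dh).
Proof. by move=> H; have := is_deriveZ k H. Qed.

Lemma cont_of_der (h q : R -> R) : (forall t : R, is_derive t 1 h (q t)) -> continuous h.
Proof.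
move=> H t; have [dh _] := H t.
by apply: differentiable_continuous; apply/derivable1_diffP.
Qed.

Lemma mvt_le (h q : R -> R) K a c : a <= c ->
  (forall t : R, is_derive t 1 h (q t)) -> (forall t, a <= t <= c -> q t <= K) ->
  h c - h a <= K * (c - a).
Proof.
move=> ac H hq.
have [x xin ->] := @MVT_segment R h q a c ac (fun x _ => H x)
  (continuous_subspaceT (cont_of_der H)).
apply: ler_wpM2r; first by rewrite subr_ge0.
by apply: hq; move: xin; rewrite in_itv.
Qed.

Lemma mvt_ge (h q : R -> R) K a c : a <= c ->
  (forall t : R, is_derive t 1 h (q t)) -> (forall t, a <= t <= c -> K <= q t) ->
  K * (c - a) <= h c - h a.
Proof.
move=> ac H hq.
have H' : forall t : R, is_derive t 1 (fun s => - h s) (- q t) by move=> t; exact: is_deriveN.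
have := mvt_le (K := - K) ac H'; rewrite mulNr => h1.
have : - (h c) - - (h a) <= - (K * (c - a)) by apply: h1 => t /hq; rewrite lerN2.
lra.
Qed.

Lemma is_derive_poly2 (c0 k t : R) :
  is_derive t 1 (fun s : R => c0 * s + k * (s * s)) (c0 + k * (t + t)).
Proof.
have h1 : is_derive t 1 (fun s : R => s) 1 := is_derive_id t 1.
have h2 : is_derive t 1 (fun s : R => s * s) (t *: 1 + t *: 1) := is_deriveM h1 h1.
have h3 := is_deriveZ c0 h1.
have h4 := is_deriveZ k h2.
have h5 := is_deriveD h3 h4.
have -> : (fun s : R => c0 * s + k * (s * s)) = c0 \*: id + k \*: (fun s : R => s * s).
  by apply: funext => s.
apply: (is_derive_eq h5).
by rewrite /GRing.scale /= !mulr1.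
Qed.


Lemma taylor_le (psi phi q : R -> R) K :
  (forall t : R, is_derive t 1 psi (phi t)) -> (forall t : R, is_derive t 1 phi (q t)) ->
  (forall t, 0 <= t <= 1 -> q t <= K) -> psi 1 - psi 0 - phi 0 <= K / 2.
Proof.
move=> Hpsi Hphi hq.
pose chi := fun s : R => psi s - (phi 0 * s + (K / 2) * (s * s)).
have Hchi : forall t : R, is_derive t 1 chi (phi t - (phi 0 + (K / 2) * (t + t))).
  by move=> t; exact: (is_deriveB (Hpsi t) (is_derive_poly2 (phi 0) (K/2) t)).
have key : forall t, 0 <= t <= 1 -> phi t - (phi 0 + (K / 2) * (t + t)) <= 0.
  move=> t /andP[t0 t1].
  have hq' : forall s, 0 <= s <= t -> q s <= K.
    by move=> s /andP[s0 st]; apply: hq; rewrite s0 (le_trans st t1).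
  have := mvt_le t0 Hphi hq'.
  move=> h; lra.
have := mvt_le (K := 0) (@ler01 R) Hchi key.
rewrite /chi; lra.
Qed.

Lemma taylor_ge (psi phi q : R -> R) K :
  (forall t : R, is_derive t 1 psi (phi t)) -> (forall t : R, is_derive t 1 phi (q t)) ->
  (forall t, 0 <= t <= 1 -> K <= q t) -> K / 2 <= psi 1 - psi 0 - phi 0.
Proof.
move=> Hpsi Hphi hq.
have H1 : forall t : R, is_derive t 1 (fun s => - psi s) (- phi t) by move=> t; exact: is_deriveN.
have H2 : forall t : R, is_derive t 1 (fun s => - phi s) (- q t) by move=> t; exact: is_deriveN.
have : - psi 1 - - psi 0 - - phi 0 <= - K / 2.
  by apply: (taylor_le H1 H2) => t ht; rewrite lerN2; exact: hq.
lra.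
Qed.

End OneD.
Section Smooth.
Variables (R : realType) (d : nat).

Definition Qw (f : 'rV[R]_d -> R) x (u w : 'rV[R]_d) :=
  \sum_j w 0 j * \sum_k u 0 k * hess f x j k.

Variables (f : 'rV[R]_d -> R).
Hypothesis hdf : forall x, differentiable f x /\ differentiable (grad f) x.

Lemma psi_der x v (t : R) :
  is_derive t 1 (fun s => f (x + s *: v)) (dotM (grad f (x + t *: v)) v).
Proof.
have := line_derive (@diff_derivable _ _ _ _ _ v (hdf (x + t *: v)).1).
by rewrite Dfun //; exact: (hdf _).1.
Qed.

Lemma phi_der x u w (t : R) :
  is_derive t 1 (fun s => dotM (grad f (x + s *: u)) w) (Qw f (x + t *: u) u w).
Proof.
have -> : (fun s => dotM (grad f (x + s *: u)) w) =
    fun s => \sum_j w 0 j * partial f j (x + s *: u).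
  apply: funext => s; rewrite /dotM big_ord1; apply: eq_bigr => j _.
  by rewrite mxE mulrC.
apply: is_derive_sumf => j; apply: is_derive_scal.
have [dp Dp] := Dpartial u j (hdf (x + t *: u)).2.
by rewrite -Dp; exact: line_derive.
Qed.

Variables (a b : R).
Hypothesis hq : forall x u, a * nrm u ^+ 2 <= Qw f x u u /\ Qw f x u u <= b * nrm u ^+ 2.

Lemma mono x v : a * nrm v ^+ 2 <= dotM (grad f (x + v) - grad f x) v /\
                 dotM (grad f (x + v) - grad f x) v <= b * nrm v ^+ 2.
Proof.
have H := phi_der x v v.
have e : dotM (grad f (x + v) - grad f x) v =
   (fun s => dotM (grad f (x + s *: v)) v) 1 - (fun s => dotM (grad f (x + s *: v)) v) 0.
  by rewrite /= scale1r scale0r addr0 dotBl.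
rewrite e; split.
  have := mvt_ge (K := a * nrm v ^+ 2) (@ler01 R) H (fun t _ => (hq _ _).1).
  by rewrite subr0 mulr1.
have := mvt_le (K := b * nrm v ^+ 2) (@ler01 R) H (fun t _ => (hq _ _).2).
by rewrite subr0 mulr1.
Qed.

Lemma taylor x v : a / 2 * nrm v ^+ 2 <= f (x + v) - f x - dotM (grad f x) v /\
                   f (x + v) - f x - dotM (grad f x) v <= b / 2 * nrm v ^+ 2.
Proof.
have H1 := psi_der x v.
have H2 := phi_der x v v.
have e : f (x + v) - f x - dotM (grad f x) v =
   (fun s => f (x + s *: v)) 1 - (fun s => f (x + s *: v)) 0 -
   (fun s => dotM (grad f (x + s *: v)) v) 0.
  by rewrite /= scale1r scale0r addr0.
rewrite e; split.
  have := taylor_ge (K := a * nrm v ^+ 2) H1 H2 (fun t _ => (hq _ _).1).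
  by rewrite mulrAC.
have := taylor_le (K := b * nrm v ^+ 2) H1 H2 (fun t _ => (hq _ _).2).
by rewrite mulrAC.
Qed.

Hypothesis ha : 0 <= a.
Hypothesis hb : 0 < b.

Lemma grad_lip x y : nrm (grad f y - grad f x) <= b * nrm (y - x).
Proof.
set Gx := grad f x. set Gy := grad f y.
set D := Gy - Gx.
set v := y - x.
set ib := b^-1.
have eD : dotM D D = dotM Gy D - dotM Gx D by rewrite {1}/D dotBl.
have eDv : dotM D v = dotM Gy v - dotM Gx v by rewrite /D dotBl.
have e1 : forall w, x + (v + w) = y + w by move=> w; rewrite /v addrA [x + _]addrC subrK.
have e2 : forall w, y + (- v + w) = x + w by move=> w; rewrite /v opprB addrA [y + _]addrC subrK.
have hbb : b / 2 * (ib * (ib * dotM D D)) = ib * dotM D D / 2.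
  by rewrite /ib; field; rewrite gt_eqF.
clearbody D v.
set w := - (ib *: D).
set w' := ib *: D.
have gw_y : dotM Gy w = - (ib * dotM Gy D) by rewrite /w dotNr dotZr.
have gw_x : dotM Gx w = - (ib * dotM Gx D) by rewrite /w dotNr dotZr.
have gw'_x : dotM Gx w' = ib * dotM Gx D by rewrite /w' dotZr.
have gw'_y : dotM Gy w' = ib * dotM Gy D by rewrite /w' dotZr.
have nw : nrm w ^+ 2 = ib * (ib * dotM D D) by rewrite nrm_sq /w dotNl dotNr opprK dotZl dotZr.
have nw' : nrm w' ^+ 2 = ib * (ib * dotM D D) by rewrite nrm_sq /w' dotZl dotZr.
have T1 := (taylor y w).2.
have T2 := (taylor x (v + w)).1.
have T3 := (taylor x w').2.
have T4 := (taylor y (- v + w')).1.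
rewrite gw_y nw hbb in T1.
rewrite e1 dotDr gw_x in T2.
rewrite gw'_x nw' hbb in T3.
rewrite e2 dotDr dotNr gw'_y in T4.
have a2 : 0 <= a / 2 by rewrite divr_ge0.
have m2 : 0 <= a / 2 * nrm (v + w) ^+ 2 by rewrite mulr_ge0 // exprn_ge0 // nrm_ge0.
have m4 : 0 <= a / 2 * nrm (- v + w') ^+ 2 by rewrite mulr_ge0 // exprn_ge0 // nrm_ge0.
have eib : ib * dotM D D = ib * dotM Gy D - ib * dotM Gx D by rewrite eD mulrBr.
move: T1 T2 T3 T4 m2 m4 eib.
move: (a / 2 * _) (a / 2 * _) (f (y + w)) (f (x + w')) => A2 A4 fyw fxw.
move=> T1 T2 T3 T4 m2 m4 eib.
have key : ib * dotM D D <= dotM Gy v - dotM Gx v by lra.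
have key2 : dotM D D <= b * dotM D v.
  by rewrite eDv -ler_pdivrMl.
have := le_trans key2 (ler_wpM2l (ltW hb) (CS D v)).
rewrite -nrm_sq.
have [D0|Dn0] := eqVneq (nrm D) 0; first by rewrite D0 mulr_ge0 ?nrm_ge0 // ltW.
have hD : 0 < nrm D by rewrite lt_def Dn0 nrm_ge0.
by rewrite expr2 mulrCA ler_pM2l.
Qed.

End Smooth.
Section HessB.
Variables (R : realType) (d : nat).
Variables (f : 'rV[R]_d -> R).
Hypothesis hdf : forall x, differentiable f x /\ differentiable (grad f) x.
Variables (a b : R).
Hypothesis hq : forall x u, a * nrm u ^+ 2 <= Qw f x u u /\ Qw f x u u <= b * nrm u ^+ 2.
Hypothesis ha : 0 <= a.
Hypothesis hb : 0 < b.

Lemma Qw_bound z (u w : 'rV[R]_d) : Qw f z u w <= b * nrm u * nrm w.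
Proof.
have H := phi_der hdf z u w 0.
have := @derive_val _ _ _ _ _ _ _ H.
rewrite scale0r addr0 => <-.
rewrite /derive.
apply: limr_le; first exact: (@ex_derive _ _ _ _ _ _ _ H).
apply: nearW => h /=.
rewrite /shift /= scale0r addr0 addr0 -dotBl.
have eh : z + (h *: (1:R)) *: u - z = h *: u.
  by rewrite addrC addKr -[h *: 1]/(h * 1) mulr1.
have hq1 : `|dotM (grad f (z + (h *: (1:R)) *: u) - grad f z) w| <= b * `|h| * nrm u * nrm w.
  apply: le_trans (CSabs _ _) _.
  apply: ler_wpM2r; first exact: nrm_ge0.
  apply: le_trans (grad_lip hdf hq ha hb _ _) _.
  by rewrite eh nrmZ mulrA.
have [->|hn0] := eqVneq h 0.
  by rewrite invr0 scale0r mulr_ge0 ?mulr_ge0 ?nrm_ge0 // ltW.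
apply: le_trans (ler_norm _) _.
rewrite -[_ *: _]/(_ * _) normrM normfV.
rewrite ler_pdivrMl ?normr_gt0 //.
by apply: le_trans hq1 _; rewrite [b * _]mulrC -!mulrA.
Qed.

Lemma hess_bound z (u : 'rV[R]_d) : nrm (hess f z *m u^T) <= b * nrm u.
Proof.
set c := hess f z *m u^T.
have Qc : Qw f z u c^T = nrm c ^+ 2.
  rewrite nrm_sq /Qw /dotM; apply: eq_bigr => j _.
  rewrite big_ord1 !mxE; congr (_ * _).
  by apply: eq_bigr => k _; rewrite !mxE mulrC.
have := Qw_bound z u c^T; rewrite Qc nrm_tr.
have [c0|cn0] := eqVneq (nrm c) 0; first by rewrite c0 mulr_ge0 ?nrm_ge0 // ltW.
have hc : 0 < nrm c by rewrite lt_def cn0 nrm_ge0.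
by rewrite expr2 ler_pM2r.
Qed.

End HessB.
Section Beta.
Variables (R : realType) (n d : nat) (F : 'I_n -> 'rV[R]_d -> R).
Hypothesis hdf : forall i x, differentiable (F i) x /\ differentiable (grad (F i)) x.

Lemma D_lin (h : 'I_n -> 'rV[R]_d -> R) (c : 'I_n -> R) (y v : 'rV[R]_d) :
  (forall i, derivable (h i) y v) ->
  derivable (fun x => \sum_i c i * h i x) y v /\
  'D_v (fun x => \sum_i c i * h i x) y = \sum_i c i * 'D_v (h i) y.
Proof.
move=> H.
have E : (fun x => \sum_i c i * h i x) = \sum_i (c i \*: h i).
  by rewrite fct_sumE.
rewrite E; split.
  by apply: derivable_sum => i; apply: derivableZ.
rewrite derive_sum; last by move=> i; apply: derivableZ.
by apply: eq_bigr => i _; rewrite deriveZ.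
Qed.

Lemma partial_fbeta b j y :
  partial (fbeta F b) j y = \sum_i b i * partial (F i) j y.
Proof.
rewrite /partial /fbeta.
have [_ ->] := D_lin b (fun i => @diff_derivable _ _ _ _ _ (ebasis R j) (hdf i y).1).
by [].
Qed.

Lemma grad_fbeta b y : grad (fbeta F b) y = \sum_i b i *: grad (F i) y.
Proof.
apply/rowP => j; rewrite mxE partial_fbeta summxE; apply: eq_bigr => i _.
by rewrite !mxE.
Qed.

Lemma hess_fbeta b x : hess (fbeta F b) x = \sum_i b i *: hess (F i) x.
Proof.
apply/matrixP => j k; rewrite mxE summxE.
have -> : (fun y => partial (fbeta F b) j y) = (fun y => \sum_i b i * partial (F i) j y).
  by apply: funext => y; rewrite partial_fbeta.
have [_ ->] := D_lin b (fun i => (Dpartial (ebasis R k) j (hdf i x).2).1).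
by apply: eq_bigr => i _; rewrite !mxE.
Qed.

End Beta.

Section Misc.
Variable R : realType.

Lemma dot_suml m k n (X : 'I_n -> 'M[R]_(m,k)) C : dotM (\sum_i X i) C = \sum_i dotM (X i) C.
Proof.
by rewrite (big_morph (fun A => dotM A C) (fun A B => dotDl A B C) (dot0l C)).
Qed.

Lemma wavg_ge n (b : 'I_n -> R) (s : 'I_n -> R) lo :
  in_simplex b -> (forall i, lo <= s i) -> lo <= \sum_i b i * s i.
Proof.
move=> [b0 b1] hs.
have -> : lo = \sum_i b i * lo by rewrite -mulr_suml b1 mul1r.
by apply: ler_sum => i _; apply: ler_wpM2l.
Qed.

Lemma wavg_le n (b : 'I_n -> R) (s : 'I_n -> R) hi :
  in_simplex b -> (forall i, s i <= hi) -> \sum_i b i * s i <= hi.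
Proof.
move=> [b0 b1] hs.
have -> : hi = \sum_i b i * hi by rewrite -mulr_suml b1 mul1r.
by apply: ler_sum => i _; apply: ler_wpM2l.
Qed.

Lemma simplex_le1 n (b : 'I_n -> R) i : in_simplex b -> b i <= 1.
Proof.
move=> [b0 <-]; rewrite (bigD1 i) //= lerDl.
by apply: sumr_ge0 => j _.
Qed.

Lemma entry_le_nrm m k (A : 'M[R]_(m,k)) i j : `|A i j| <= nrm A.
Proof.
rewrite /nrm vnorm2E -sqrtr_sqr ler_sqrt ?dotxx_ge0 //.
rewrite /dotM (bigD1 i) //= (bigD1 j) //= expr2 -addrA lerDl.
apply: addr_ge0; first by apply: sumr_ge0 => l _; rewrite -expr2 sqr_ge0.
apply: sumr_ge0 => l _; apply: sumr_ge0 => l' _; by rewrite -expr2 sqr_ge0.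
Qed.

Lemma Qw_qf d (f : 'rV[R]_d -> R) x (u : 'rV[R]_d) :
  Qw f x u u = ((u^T)^T *m hess f x *m u^T) 0 0.
Proof.
rewrite qf_dot /Qw /dotM; apply: eq_bigr => j _.
rewrite big_ord1 !mxE; congr (_ * _).
by apply: eq_bigr => k _; rewrite !mxE mulrC.
Qed.

End Misc.
Section BetaA.
Variables (R : realType) (n d : nat) (F : 'I_n -> 'rV[R]_d -> R).
Hypothesis hdf : forall i x, differentiable (F i) x /\ differentiable (grad (F i)) x.
Variables (mu L : R).
Hypothesis hmu : 0 < mu.
Hypothesis hmuL : mu <= L.
Hypothesis hq : forall i x u, mu * nrm u ^+ 2 <= Qw (F i) x u u /\ Qw (F i) x u u <= L * nrm u ^+ 2.

Lemma hL : 0 < L. Proof. exact: lt_le_trans hmuL. Qed.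

Lemma mono_b b x v : in_simplex b ->
  mu * nrm v ^+ 2 <= dotM (grad (fbeta F b) (x + v) - grad (fbeta F b) x) v.
Proof.
move=> hb; rewrite !(grad_fbeta hdf) -sumrB dot_suml.
under eq_bigr do rewrite -scalerBr dotZl.
by apply: wavg_ge => // i; exact: (mono (hdf i) (hq i) x v).1.
Qed.

Lemma taylor_b b x v : in_simplex b ->
  mu / 2 * nrm v ^+ 2 <= fbeta F b (x + v) - fbeta F b x - dotM (grad (fbeta F b) x) v /\
  fbeta F b (x + v) - fbeta F b x - dotM (grad (fbeta F b) x) v <= L / 2 * nrm v ^+ 2.
Proof.
move=> hb.
have -> : fbeta F b (x + v) - fbeta F b x - dotM (grad (fbeta F b) x) v =
   \sum_i b i * (F i (x + v) - F i x - dotM (grad (F i) x) v).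
  rewrite (grad_fbeta hdf) dot_suml /fbeta -!sumrB; apply: eq_bigr => i _.
  by rewrite dotZl !mulrBr.
split.
  by apply: wavg_ge => // i; exact: (taylor (hdf i) (hq i) x v).1.
by apply: wavg_le => // i; exact: (taylor (hdf i) (hq i) x v).2.
Qed.

Lemma fbeta_cont b : continuous (fbeta F b).
Proof.
have E : fbeta F b = \sum_i (b i \*: F i) by rewrite fct_sumE.
move=> x; rewrite E; apply: differentiable_continuous.
by apply: differentiable_sum => i; apply: differentiableZ; exact: (hdf i x).1.
Qed.

Lemma min_exists b : in_simplex b -> forall y, fbeta F b (xstar F b) <= fbeta F b y.
Proof.
move=> hb.
set g := nrm (grad (fbeta F b) 0).
set r := 2 * g / mu.
have r0 : 0 <= r by rewrite divr_ge0 ?mulr_ge0 ?nrm_ge0 // ltW.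
pose A := [set v : 'rV[R]_d | forall i, (`[- r, r]%classic : set R) (v ord0 i)].
have cA : compact A.
  by apply: (@rV_compact _ _ (fun _ => (`[- r, r]%classic : set R))) => i; exact: segment_compact.
have A0 : A 0.
  by move=> i /=; rewrite mxE in_itv /= oppr_le0 r0.
have A0' : A !=set0 by exists 0.
have cf : {within A, continuous (fbeta F b)}.
  have fc := @fbeta_cont b.
  exact: (@continuous_subspaceT _ _ A _ fc).
have [c cA' cmin] := (@EVT_min_rV R d (fbeta F b) A A0' cA cf).
have key : forall y, fbeta F b c <= fbeta F b y.
  move=> y; have [yr|ry] := leP (nrm y) r.
    apply: cmin; rewrite inE => i /=; rewrite in_itv /= -ler_norml.
    exact: le_trans (entry_le_nrm _ _ _) yr.
  apply: le_trans (cmin 0 _) _; first by rewrite inE.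
  have T := (taylor_b 0 y hb).1; rewrite add0r in T.
  have C := CSabs (grad (fbeta F b) 0) y.
  have hN : 2 * g < mu * nrm y by rewrite -ltr_pdivrMl // mulrC.
  have N0 := nrm_ge0 y.
  move: T C hN N0; rewrite -/g.
  move: (dotM _ _) (nrm y) (fbeta F b y) (fbeta F b 0) => q N fy f0.
  rewrite ler_norml => T /andP[C1 C2] hN N0.
  nra.
exact: (@xgetPex _ 0 [set x | forall y, fbeta F b x <= fbeta F b y] (ex_intro _ c key)).
Qed.

Lemma grad_xstar b : in_simplex b -> grad (fbeta F b) (xstar F b) = 0.
Proof.
move=> hb.
set x := xstar F b; set g := grad (fbeta F b) x.
set iL := L^-1.
have T := (taylor_b x (- (iL *: g)) hb).2.
have M := min_exists hb (x - iL *: g).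
rewrite nrm_sq dotNl dotNr opprK dotZl dotZr dotNr dotZr in T.
have e : L / 2 * - (iL * - (iL * dotM g g)) = iL * dotM g g / 2.
  by rewrite /iL; field; rewrite gt_eqF // hL.
rewrite -/g e in T.
have k : iL * dotM g g <= 0 by lra.
have iL0 : 0 < iL by rewrite invr_gt0 hL.
apply: dotxx_eq0; apply/eqP; rewrite eq_le dotxx_ge0 andbT.
by rewrite -(pmulr_rle0 _ iL0).
Qed.

Lemma xstar_pareto b : in_simplex b -> pareto_set F (xstar F b).
Proof. by move=> hb; exists b; split => //; exact: grad_xstar. Qed.

Definition Mg := \sum_i nrm (grad (F i) 0).

Lemma pareto_bound p : pareto_set F p -> nrm p <= Mg / mu.
Proof.
move=> [b [hb gp]].
have T := mono_b 0 p hb; rewrite add0r gp sub0r dotNl in T.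
have hg : nrm (grad (fbeta F b) 0) <= Mg.
  rewrite (grad_fbeta hdf); apply: le_trans (nrm_sum _) _.
  apply: ler_sum => i _; rewrite nrmZ ger0_norm; last by case: hb.
  by rewrite ler_piMl ?nrm_ge0 // simplex_le1.
have C := CSabs (grad (fbeta F b) 0) p.
have N0 := nrm_ge0 p.
have C' : `|- dotM (grad (fbeta F b) 0) p| <= nrm (grad (fbeta F b) 0) * nrm p by rewrite normrN.
have := le_trans (le_trans T (ler_norm _)) C'.
have [p0|pn0] := eqVneq (nrm p) 0.
  move=> _; rewrite p0; apply: divr_ge0; last exact: ltW.
  by rewrite /Mg; apply: sumr_ge0 => i _; exact: nrm_ge0.
have hp : 0 < nrm p by rewrite lt_def pn0 N0.
rewrite expr2 mulrA ler_pM2r // => h.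
rewrite ler_pdivlMr // mulrC; apply: le_trans h _.
exact: hg.
Qed.

Lemma diam_ub x y : pareto_set F x -> pareto_set F y -> nrm (x - y) <= pareto_diam F.
Proof.
move=> px py; apply: ub_le_sup; last by exists x, y.
exists (Mg / mu + Mg / mu) => _ [x' [y' [px' [py' ->]]]].
apply: le_trans (nrmB _ _) _.
by apply: lerD; exact: pareto_bound.
Qed.

Lemma diam_ge0 (b : 'I_n -> R) : in_simplex b -> 0 <= pareto_diam F.
Proof.
move=> hb; have := diam_ub (xstar_pareto hb) (xstar_pareto hb).
by rewrite subrr nrm0.
Qed.

Definition ebeta (i : 'I_n) : 'I_n -> R := fun k => (k == i)%:R.

Lemma ebeta_simplex i : in_simplex (ebeta i).
Proof.
split; first by move=> k; rewrite /ebeta ler0n.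
rewrite (bigD1 i) //= big1 /ebeta ?eqxx ?addr0 // => k /negbTE ->; by [].
Qed.

Lemma grad_ebeta i y : grad (fbeta F (ebeta i)) y = grad (F i) y.
Proof.
rewrite (grad_fbeta hdf) (bigD1 i) //= big1 /ebeta ?eqxx ?scale1r ?addr0 //.
by move=> k /negbTE ->; rewrite scale0r.
Qed.

Lemma grad_i_bound i b : in_simplex b ->
  nrm (grad (F i) (xstar F b)) <= L * pareto_diam F.
Proof.
move=> hb.
have z : grad (F i) (xstar F (ebeta i)) = 0.
  by rewrite -grad_ebeta grad_xstar //; exact: ebeta_simplex.
have := grad_lip (hdf i) (hq i) (ltW hmu) hL (xstar F (ebeta i)) (xstar F b).
rewrite z subr0 => h; apply: le_trans h _.
apply: ler_wpM2l; first exact: ltW hL.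
by apply: diam_ub; apply: xstar_pareto => //; exact: ebeta_simplex.
Qed.

Lemma xstar_lip b b' : in_simplex b -> in_simplex b' ->
  nrm (xstar F b' - xstar F b) <= L * pareto_diam F / mu * l1dist b b'.
Proof.
move=> hb hb'.
set xb := xstar F b; set xb' := xstar F b'.
set D := xb' - xb.
have T := mono_b xb D hb.
have e : xb + D = xb' by rewrite /D addrC subrK.
rewrite e (grad_xstar hb) subr0 in T.
have e2 : dotM (grad (fbeta F b) xb') D =
    \sum_i (b i - b' i) * dotM (grad (F i) xb') D.
  rewrite -[grad (fbeta F b) xb']subr0 -(grad_xstar hb') -/xb'.
  rewrite !(grad_fbeta hdf) -sumrB dot_suml; apply: eq_bigr => i _.
  by rewrite -scalerBl dotZl.
rewrite e2 in T.
have B : \sum_i (b i - b' i) * dotM (grad (F i) xb') D <=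
     l1dist b b' * (L * pareto_diam F * nrm D).
  rewrite /l1dist mulr_suml; apply: ler_sum => i _.
  apply: le_trans (ler_norm _) _; rewrite normrM.
  apply: ler_wpM2l; first exact: normr_ge0.
  apply: le_trans (CSabs _ _) _.
  apply: ler_wpM2r; first exact: nrm_ge0.
  exact: grad_i_bound.
have := le_trans T B.
have [D0|Dn0] := eqVneq (nrm D) 0.
  move=> _; rewrite D0; apply: mulr_ge0; last by apply: sumr_ge0 => i _.
  by rewrite divr_ge0 ?mulr_ge0 ?(diam_ge0 hb) // ltW // hL.
have hD : 0 < nrm D by rewrite lt_def Dn0 nrm_ge0.
move=> h; rewrite mulrAC ler_pdivlMr //.
move: (l1dist b b') (L * pareto_diam F) (nrm D) hD h => dl K N hN h.
nra.
Qed.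
End BetaA.

Lemma nrm_d0 (R : realType) d m (A : 'M[R]_(m, d)) : d = 0%N -> nrm A = 0.
Proof.
move=> d0; rewrite /nrm vnorm2E /dotM big1 ?sqrtr0 // => i _.
by apply: big1 => j _; exfalso; have := ltn_ord j; move: (nat_of_ord j) => k; rewrite d0.
Qed.

Lemma hA_lemma (R : realType) n d (F : 'I_n -> 'rV[R]_d -> R) mu b x
  (hhess : forall i (x : 'rV[R]_d) (v : 'cV[R]_d), mu * vnorm2 v ^+ 2 <= (v^T *m hess (F i) x *m v) 0 0)
  (hdf : forall i x, differentiable (F i) x /\ differentiable (grad (F i)) x) :
  in_simplex b -> forall c : 'cV[R]_d, mu * nrm c ^+ 2 <= dotM c (hess (fbeta F b) x *m c).
Proof.
move=> hb c; rewrite (hess_fbeta hdf) mulmx_suml dotC dot_suml.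
under eq_bigr do rewrite -scalemxAl dotZl dotC.
apply: wavg_ge => // i; rewrite -qf_dot; exact: hhess.
Qed.

Lemma col_dx (R : realType) n d (F : 'I_n -> 'rV[R]_d -> R) b j :
  col j (dxstar F b) =
  - (invmx (hess (fbeta F b) (xstar F b)) *m (grad (F j) (xstar F b))^T).
Proof.
rewrite /dxstar colE mulNmx -mulmxA -colE -tr_row; congr (- (_ *m _^T)).
by apply/rowP => k; rewrite !mxE.
Qed.

Lemma inv_decomp (R : realType) d (A A' : 'M[R]_d) (g g' : 'cV[R]_d) :
  A \in unitmx -> A' \in unitmx ->
  - (invmx A *m g) - - (invmx A' *m g') =
  invmx A *m ((A - A') *m (invmx A' *m g') + (g' - g)).
Proof.
move=> uA uA'.
rewrite mulmxDr mulmxBl mulmxBr mulmxBr !mulmxA mulVmx // mul1mx.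
rewrite -[invmx A *m A' *m invmx A']mulmxA mulmxV // mulmx1.
by rewrite addrA subrK opprK addrC.
Qed.

Lemma sum_decomp (R : realType) n d (b b' : 'I_n -> R) (H H' : 'I_n -> 'M[R]_d) :
  \sum_i b i *: H i - \sum_i b' i *: H' i =
  \sum_i ((b i - b' i) *: H i + b' i *: (H i - H' i)).
Proof.
rewrite -sumrB; apply: eq_bigr => i _.
by rewrite scalerBl scalerBr addrA subrK.
Qed.

Lemma hAA_abs (R : realType) n d (b b' : 'I_n -> R) (H H' : 'I_n -> 'M[R]_d)
  (c : 'cV[R]_d) (L K : R) :
  in_simplex b' -> (forall i, nrm (H i *m c) <= L * nrm c) ->
  (forall i, nrm ((H i - H' i) *m c) <= K * nrm c) ->
  nrm ((\sum_i ((b i - b' i) *: H i + b' i *: (H i - H' i))) *m c)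
    <= (l1dist b b' * L + K) * nrm c.
Proof.
move=> [hb0 hb1] h1 h2.
rewrite mulmx_suml; apply: le_trans (nrm_sum _) _.
have -> : (l1dist b b' * L + K) * nrm c =
    \sum_i (`|b i - b' i| * (L * nrm c) + b' i * (K * nrm c)).
  rewrite big_split /= -!mulr_suml hb1 mul1r /l1dist mulrDl mulrA.
  by [].
apply: ler_sum => i _.
rewrite mulmxDl -!scalemxAl; apply: le_trans (nrmD _ _) _.
rewrite !nrmZ; apply: lerD; first by apply: ler_wpM2l; [exact: normr_ge0|exact: h1].
by rewrite ger0_norm //; apply: ler_wpM2l.
Qed.

Lemma final_arith (R : realType) (mu L LH Rd dl nc X N : R) :
  0 < mu -> 0 < L -> 0 <= LH -> 0 <= Rd -> 0 <= dl -> 0 <= nc -> nc <= L * Rd / mu ->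
  0 <= X -> X <= L * Rd / mu * dl -> N <= (dl * L + LH * X) * nc + L * X ->
  N / mu <= 2 * L ^+ 2 * Rd / mu ^+ 2 * (1 + LH * Rd / mu) * dl.
Proof.
move=> hmu hL hLH hRd hdl hnc hncP hX hXP hN.
have -> : 2 * L ^+ 2 * Rd / mu ^+ 2 * (1 + LH * Rd / mu) * dl =
   (2 * L * (L * Rd / mu) * dl + 2 * LH * (L * Rd / mu) * (L * Rd / mu) * dl) / mu.
  by field; rewrite gt_eqF.
have P0 : 0 <= L * Rd / mu by rewrite divr_ge0 ?mulr_ge0 // ltW.
move: hncP hXP P0 hN; move: (L * Rd / mu) => P hncP hXP P0 hN.
apply: ler_wpM2r; first by rewrite invr_ge0 ltW.
have h1 : (dl * L + LH * X) * nc <= (dl * L + LH * (P * dl)) * P.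
  apply: ler_pM => //; first by rewrite addr_ge0 ?mulr_ge0 // ltW.
  by rewrite lerD2l ler_wpM2l.
have h2 : L * X <= L * (P * dl) by rewrite ler_wpM2l // ltW.
have h3 : 0 <= LH * P * P * dl by rewrite !mulr_ge0.
lra.
Qed.

Unset Implicit Arguments.
Theorem lemma9 (R : realType) (n d : nat) (F : 'I_n -> 'rV[R]_d -> R)
  (mu L LH : R) (hmu : 0 < mu) (hmuL : mu <= L)
  (hdiff : forall i, twice_diff (F i))
  (hhess : forall i (x : 'rV[R]_d) (v : 'cV[R]_d),
      mu * vnorm2 v ^+ 2 <= (v^T *m hess (F i) x *m v) 0 0
      /\ (v^T *m hess (F i) x *m v) 0 0 <= L * vnorm2 v ^+ 2)
  (hlip : forall i (x y : 'rV[R]_d),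
      spec_norm (hess (F i) x - hess (F i) y) <= LH * vnorm2 (x - y))
  (beta beta' : 'I_n -> R) (hb : in_simplex beta) (hb' : in_simplex beta') :
  norm12 (dxstar F beta - dxstar F beta')
    <= 2 * L ^+ 2 * pareto_diam F / mu ^+ 2
       * (1 + LH * pareto_diam F / mu) * l1dist beta beta'.
Proof.
have hdf : forall i x, differentiable (F i) x /\ differentiable (grad (F i)) x.
  by move=> i x; exact: hdiff.
have hq : forall i x u, mu * nrm u ^+ 2 <= Qw (F i) x u u /\ Qw (F i) x u u <= L * nrm u ^+ 2.
  by move=> i x u; rewrite Qw_qf -(nrm_tr u); exact: hhess.
have hL : 0 < L := lt_le_trans hmu hmuL.
have [j0 _] : exists j : 'I_n, True.
  apply: contrapT => H; case: hb => _; rewrite big1 => [|i _].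
    by move=> /eqP; rewrite eq_sym oner_eq0.
  by exfalso; apply: H; exists i.
set Rd := pareto_diam F.
set dl := l1dist beta beta'.
have Rd0 : 0 <= Rd := diam_ge0 hdf hmu hmuL hq hb.
have dl0 : 0 <= dl by apply: sumr_ge0 => i _.
apply: (norm12_le j0) => j.
rewrite colE mulmxBl -!colE !col_dx.
have [d0|dpos] := eqVneq d 0%N.
  rewrite -nrm_tr nrm_d0 //.
  have -> : Rd = 0.
    apply/eqP; rewrite eq_le Rd0 andbT; apply: ge_sup.
      exists 0, (xstar F beta), (xstar F beta).
      by split; [exact: (xstar_pareto hdf hmu hmuL hq hb)|split; [exact: (xstar_pareto hdf hmu hmuL hq hb)|rewrite subrr -/(nrm _) nrm0]].
    by move=> _ [x [y [_ [_ ->]]]]; rewrite -/(nrm _) nrm_d0.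
  by rewrite !(mulr0, mul0r).
have LH0 : 0 <= LH.
  have d0' : (0 < d)%N by rewrite lt0n.
  have e0 : vnorm2 (delta_mx (Ordinal d0') 0 : 'cV[R]_d) = 1.
    rewrite -/(nrm _) -nrm_tr /nrm vnorm2E /dotM big_ord1 (bigD1 (Ordinal d0')) //= big1.
      by rewrite !mxE !eqxx mulr1 addr0 sqrtr1.
    by move=> k hk; rewrite !mxE (negbTE hk) mulr0.
  set e := (delta_mx (Ordinal d0') 0 : 'cV[R]_d).
  have h1 := hlip j0 0 e^T.
  have h2 := spec_norm_ge0 (hess (F j0) 0 - hess (F j0) e^T) e0.
  have : vnorm2 (0 - e^T) = 1 by rewrite sub0r -/(nrm _) nrmN nrm_tr.
  move=> h3; rewrite h3 mulr1 in h1; exact: le_trans h2 h1.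
set xb := xstar F beta; set xb' := xstar F beta'.
set A := hess (fbeta F beta) xb; set A' := hess (fbeta F beta') xb'.
set g := (grad (F j) xb)^T; set g' := (grad (F j) xb')^T.
have hA := hA_lemma xb (fun i x v => (hhess i x v).1) hdf hb.
have hA' := hA_lemma xb' (fun i x v => (hhess i x v).1) hdf hb'.
have uA := coer_unit hmu hA; have uA' := coer_unit hmu hA'.
pose c := invmx A' *m g'.
have E : - (invmx A *m g) - - (invmx A' *m g') =
         invmx A *m ((A - A') *m c + (g' - g)).
  rewrite /c; exact: (inv_decomp g g' uA uA').
rewrite E.
apply: le_trans (inv_bound hmu hA _) _.
have P0 : 0 <= L * Rd / mu by rewrite divr_ge0 ?mulr_ge0 // ltW.
pose X := nrm (xb' - xb).
have hX : X <= L * Rd / mu * dl := xstar_lip hdf hmu hmuL hq hb hb'.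
have X0 : 0 <= X := nrm_ge0 _.
have hc : nrm c <= L * Rd / mu.
  apply: le_trans (inv_bound hmu hA' _) _.
  rewrite /g' nrm_tr ler_pM2r ?invr_gt0 //.
  exact: (grad_i_bound hdf hmu hmuL hq j hb').
have c0 : 0 <= nrm c := nrm_ge0 _.
have hgg : nrm (g' - g) <= L * X.
  have -> : g' - g = (grad (F j) xb' - grad (F j) xb)^T by rewrite linearB.
  rewrite nrm_tr; exact: (grad_lip (hdf j) (hq j) (ltW hmu) hL xb xb').
have eAA : A - A' = \sum_i ((beta i - beta' i) *: hess (F i) xb
                           + beta' i *: (hess (F i) xb - hess (F i) xb')).
  rewrite /A /A' !(hess_fbeta hdf); exact: sum_decomp.
have hAA : nrm ((A - A') *m c) <= (dl * L + LH * X) * nrm c.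
  rewrite eAA; apply: hAA_abs => // i.
    have := hess_bound (hdf i) (hq i) (ltW hmu) hL xb c^T.
    by rewrite trmxK nrm_tr.
  apply: le_trans (spec_norm_bound _ _) _.
  apply: ler_wpM2r; first exact: c0.
  apply: le_trans (hlip i xb xb') _.
  by rewrite -/(nrm (xb - xb')) -opprB nrmN.
have S := le_trans (nrmD _ _) (lerD hAA hgg).
apply: le_trans (ler_wpM2r _ S) _; first by rewrite invr_ge0 ltW.
exact: (final_arith hmu hL LH0 Rd0 dl0 c0 hc X0 hX (lexx _)).
Qed.
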